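(* Let $(\alpha_n)_{n\ge0}$ be complex numbers with $|\alpha_n|<1$, let $n,r,s$ be nonnegative integers, and suppose $\alpha_i\neq0$ for $0\le i\le n+r$. If $n\ge1$, then \[ \eta_{n,r,s}=-\left(\overline{\alpha_{s-1}}\right)^{-1}\sum_p\mathrm{wt}_S(p), \] where the sum is over all Schröder paths from $(0,r)$ to $(n,s)$ that neither start nor end with a vertical down-step $(0,-1)$. If $n=0$, then \[ \eta_{0,r,s}=\begin{cases}-\dfrac{1}{\overline{\alpha_{r-1}}}&\text{if } s=r,\\[2pt] \dfrac{1-|\alpha_{r-1}|^2}{\overline{\alpha_{r-1}}}&\text{if } s=r-1,\\[2pt] 0&\text{otherwise.}\end{cases} \]
   Context: For a polynomial $f(z)=\sum_{k=0}^n a_kz^k$ of degree $n$, write $\overline{f}(z)=\sum_k\overline{a_k}z^k$ and $f^*(z)=z^n\overline{f}(1/z)$. Define monic $\Phi_n$ by $\Phi_0=1$, $\Phi_{n+1}(z)=z\Phi_n(z)-\overline{\alpha_n}\Phi_n^*(z)$, where $\Phi_n^*(z)=z^n\overline{\Phi_n}(1/z)$. Set $\alpha_{-1}=-1$. Under the hypothesis, the polynomials $\Phi_0^*,\dots,\Phi_{n+r}^*$ have degrees $0,\dots,n+r$, so there are unique coefficients $c_{n,r,s}$ with $z^n\Phi_r(z)=\sum_{s=0}^{n+r}c_{n,r,s}\Phi_s^*(z)$; set $c_{n,r,s}=0$ for $s>n+r$ and $\eta_{n,r,s}=\overline{c_{n,r,s}}$. A Schröder path is a lattice path in $\mathbb{Z}\times\mathbb{Z}_{\ge0}$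 with steps $(1,1)$, $(1,0)$, $(0,-1)$. $\mathrm{wt}_S(p)$ is the product of step weights: $(a,b)\to(a+1,b+1)$ weight $1$; $(a,b)\to(a+1,b)$ weight $-\overline{\alpha_{b-1}}/\overline{\alpha_b}$; $(a,b)\to(a,b-1)$ weight $\frac{\overline{\alpha_{b-2}}}{\overline{\alpha_{b-1}}}(1-|\alpha_{b-1}|^2)$. *)

(* Defs.v *)
(* Complex numbers are modelled by an arbitrary
   numClosedFieldType C (this includes the complex numbers). *)
From HB Require Import structures.
From mathcomp Require Import all_boot all_order all_algebra.
Set Implicit Arguments. Unset Strict Implicit. Unset Printing Implicit Defensive.
Import Order.TTheory GRing.Theory Num.Theory.
Local Open Scope ring_scope.

Section Defs.
Variable C : numClosedFieldType.

(* f^*(z) = z^d conj(f)(1/z), for a polynomial f of degree (at most) d *)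
Definition pstar (d : nat) (p : {poly C}) : {poly C} :=
  \poly_(i < d.+1) (p`_(d - i))^*.

Fixpoint Phi (alpha : nat -> C) (k : nat) : {poly C} :=
  match k with
  | 0%N => 1
  | k'.+1 => 'X * Phi alpha k' - (alpha k')^* *: pstar k' (Phi alpha k')
  end.

Definition Phi_star (alpha : nat -> C) (k : nat) : {poly C} :=
  pstar k (Phi alpha k).

(* am1 alpha j = alpha_{j-1}, with the convention alpha_{-1} = -1 *)
Definition am1 (alpha : nat -> C) (j : nat) : C :=
  if j is j'.+1 then alpha j' else -1.

End Defs.

(* Schroder steps: U = (1,1), H = (1,0), D = (0,-1) *)
Inductive step := SU | SH | SD.

Definition step_to (s : step) : 'I_3 :=
  match s with SU => inord 0 | SH => inord 1 | SD => inord 2 end.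
Definition step_of (i : 'I_3) : step :=
  match val i with 0%N => SU | 1%N => SH | _ => SD end.
Lemma step_K : cancel step_to step_of.
Proof. by case; rewrite /step_of /= inordK. Qed.
HB.instance Definition _ := Finite.copy step (can_type step_K).

Fixpoint valid_from (h : nat) (p : seq step) (s : nat) : bool :=
  match p with
  | [::] => h == s
  | SU :: p' => valid_from h.+1 p' s
  | SH :: p' => valid_from h p' s
  | SD :: p' => (0 < h)%N && valid_from h.-1 p' s
  end.

Definition xlen (p : seq step) : nat := count (fun st => st != SD) p.

Definition schroder_ok (n r s : nat) (p : seq step) : bool :=
  [&& valid_from r p s, xlen p == n, head SH p != SD & last SH p != SD].

Section Weights.
Variable C : numClosedFieldType.
Variable alpha : nat -> C.

Fixpoint wtS (h : nat) (p : seq step) : C :=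
  match p with
  | [::] => 1
  | SU :: p' => wtS h.+1 p'
  | SH :: p' => (- (am1 alpha h)^* / (am1 alpha h.+1)^*) * wtS h p'
  | SD :: p' => ((am1 alpha h.-1)^* / (am1 alpha h)^*
                  * (1 - `|am1 alpha h| ^+ 2)) * wtS h.-1 p'
  end.

(* Such paths have length at most 2n + r
   (#U + #H = n and #D = r + #U - s), so enumerating step sequences of
   length <= 2n + r enumerates all of them. *)
Definition schroder_sum (n r s : nat) : C :=
  \sum_(k < (2 * n + r).+1) \sum_(t : k.-tuple step | schroder_ok n r s t)
     wtS r t.
End Weights.

(* Main.v *)
Require Import Defs.
From HB Require Import structures.
From mathcomp Require Import all_boot all_order all_algebra.
From mathcomp Require Import zify ring.
Import Order.TTheory GRing.Theory Num.Theory.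
Set Implicit Arguments. Unset Strict Implicit. Unset Printing Implicit Defensive.
Local Open Scope ring_scope.


Lemma neqUD : (SU != SD) = true. Proof. by apply/eqP. Qed.
Lemma neqHD : (SH != SD) = true. Proof. by apply/eqP. Qed.
Lemma neqDD : (SD != SD) = false. Proof. by rewrite eqxx. Qed.
Lemma mem_steps (x : step) : x \in [:: SU; SH; SD].
Proof. by rewrite !inE; destruct x; rewrite eqxx ?orbT. Qed.
Lemma uniq_steps : uniq [:: SU; SH; SD].
Proof.
rewrite /= !inE andbT neqHD andbT; apply/negP.
by case/orP=> /eqP.
Qed.

Fixpoint lists (k : nat) : seq (seq step) :=
  if k is k'.+1 then [seq rcons t x | t <- lists k', x <- [:: SU; SH; SD]]
  else [:: [::]].

Lemma mem_lists k t : (t \in lists k) = (size t == k).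
Proof.
elim: k t => [|k IH] t.
  by rewrite /= inE; case: t.
apply/allpairsP/idP.
  by case=> [[t' x]] /= [H1 _ ->]; rewrite size_rcons eqSS -IH.
case/lastP: t => [|t' x] //; rewrite size_rcons eqSS -IH => H.
exists (t', x); split => //=. exact: mem_steps.

Qed.

Lemma uniq_lists k : uniq (lists k).
Proof.
elim: k => [|k IH] //.
apply: (@allpairs_uniq _ _ _ (fun t x => rcons t x)) => //; last first.
  by move=> [a b] [c d] _ _ /= /rcons_inj.
exact: uniq_steps.
Qed.

Lemma tuple_lists (R : nmodType) k (P : pred (seq step)) (F : seq step -> R) :
  \sum_(t : k.-tuple step | P t) F t = \sum_(t <- lists k | P t) F t.
Proof.
rewrite -(big_map (fun t : k.-tuple step => val t) P F).
apply: perm_big; apply: uniq_perm.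
- by rewrite (map_inj_uniq val_inj) index_enum_uniq.
- exact: uniq_lists.
move=> t; rewrite mem_lists; apply/mapP/idP.
  by case=> u _ ->; rewrite size_tuple.
by move=> H; exists (Tuple H) => //; rewrite mem_index_enum.
Qed.

Lemma valid_rcons_U h t s :
  valid_from h (rcons t SU) s = (0 < s)%N && valid_from h t s.-1.
Proof.
elim: t h => [|y t IH] h /=; first by case: s.
by case: y => /=; rewrite ?IH // andbCA.
Qed.

Lemma valid_rcons_H h t s : valid_from h (rcons t SH) s = valid_from h t s.
Proof. by elim: t h => [|y t IH] h //=; case: y => /=; rewrite ?IH. Qed.

Lemma valid_rcons_D h t s : valid_from h (rcons t SD) s = valid_from h t s.+1.
Proof.
elim: t h => [|y t IH] h /=; first by case: h.
by case: y => /=; rewrite ?IH.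
Qed.

Lemma xlen_rcons t x : xlen (rcons t x) = (xlen t + (x != SD))%N.
Proof. by rewrite /xlen -cats1 count_cat /= addn0. Qed.

Lemma xlen_cons y t : xlen (y :: t) = ((y != SD) + xlen t)%N.
Proof. by []. Qed.

Lemma head_rcons_nD (t : seq step) (x : step) : x != SD ->
  (head SH (rcons t x) != SD) = (head SH t != SD).
Proof. by case: t => [|y t] //= ->; rewrite neqHD. Qed.

Lemma head_rcons_D (t : seq step) :
  (head SH (rcons t SD) != SD) = (t != [::]) && (head SH t != SD).
Proof. by case: t => [|y t] //=; rewrite neqDD. Qed.

Lemma valid_le h t s : valid_from h t s -> (s <= h + xlen t)%N.
Proof.
elim: t h => [|y t IH] h; first by move/eqP->; rewrite /xlen /=; lia.
rewrite xlen_cons; case: y => /=; rewrite ?neqUD ?neqHD ?neqDD.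
- by move/IH; lia.
- by move/IH; lia.
- by case/andP=> H /IH; lia.
Qed.

Lemma valid_size h t s : valid_from h t s -> (size t + s <= 2 * xlen t + h)%N.
Proof.
elim: t h => [|y t IH] h; first by move/eqP->; rewrite /xlen /=; lia.
rewrite xlen_cons; case: y => /=; rewrite ?neqUD ?neqHD ?neqDD.
- by move/IH; lia.
- by move/IH; lia.
- by case/andP=> H /IH; lia.
Qed.

Lemma xlen0_head (t : seq step) : xlen t = 0%N -> head SH t != SD -> t = [::].
Proof.
case: t => [|y t] //; rewrite xlen_cons.
by case: y; rewrite ?neqUD ?neqHD ?neqDD.
Qed.

Section Sums.
Variable C : numClosedFieldType.
Variable alpha : nat -> C.
Variable r : nat.

Definition wst (m : nat) (x : step) : C :=
  match x with
  | SU => 1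
  | SH => - (am1 alpha m)^* / (am1 alpha m.+1)^*
  | SD => (am1 alpha m.-1)^* / (am1 alpha m)^* * (1 - `|am1 alpha m| ^+ 2)
  end.

Lemma wtS_rcons h t m x : valid_from h t m ->
  wtS alpha h (rcons t x) = wtS alpha h t * wst m x.
Proof.
elim: t h => [|y t IH] h /=.
  by move/eqP->; case: x => /=; rewrite ?mulr1 ?mul1r.
case: y => /=.
- exact: IH.
- by move/IH->; rewrite mulrA.
- by case/andP=> _ /IH->; rewrite mulrA.
Qed.

Definition LS K (P : pred (seq step)) : C :=
  \sum_(k < K) \sum_(t <- lists k | P t) wtS alpha r t.

Lemma LS_bound K0 K (P : pred (seq step)) : (forall t, P t -> (size t < K0)%N) -> (K0 <= K)%N ->
  LS K P = LS K0 P.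
Proof.
move=> HP HK; rewrite /LS -(subnKC HK) big_split_ord /=.
rewrite [X in _ + X]big1 ?addr0 // => i _.
rewrite big1_seq // => t /andP[Pt]; rewrite mem_lists /= => /eqP Hs.
by have := HP t Pt; rewrite Hs; lia.
Qed.

Lemma LS_pred0 K (P : pred (seq step)) : (forall t, ~~ P t) -> LS K P = 0.
Proof.
move=> HP; rewrite /LS big1 // => i _.
by rewrite big1_seq // => t /andP[Pt]; rewrite (negbTE (HP t)) in Pt.
Qed.

Definition Srcons K (P : pred (seq step)) x : C :=
  \sum_(k < K) \sum_(t <- lists k)
     (if P (rcons t x) then wtS alpha r (rcons t x) else 0).

Lemma LS_S K (P : pred (seq step)) : LS K.+1 P = (if P [::] then 1 else 0)
   + Srcons K P SU + Srcons K P SH + Srcons K P SD.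
Proof.
rewrite /LS big_ord_recl [lists 0]/= big_cons big_nil addr0 -!addrA.
congr (_ + _).
rewrite /Srcons -!big_split; apply: eq_bigr => i _.
have -> : (lift ord0 i : nat) = i.+1 by [].
change (lists i.+1) with [seq rcons t x | t <- lists i, x <- [:: SU; SH; SD]].
rewrite big_mkcond big_allpairs_dep -!big_split; apply: eq_bigr => t _.
rewrite !big_cons big_nil /=. by rewrite addr0.
Qed.

Lemma Srcons_eq K (P Q : pred (seq step)) x (w : C) :
  (forall t, P (rcons t x) = Q t) ->
  (forall t, Q t -> wtS alpha r (rcons t x) = wtS alpha r t * w) ->
  Srcons K P x = LS K Q * w.
Proof.
move=> HPQ Hw; rewrite /Srcons /LS big_distrl; apply: eq_bigr => k _.
rewrite big_distrl [RHS]big_mkcond /=; apply: eq_bigr => t _.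
by rewrite HPQ; case: ifP => // /Hw ->.
Qed.

Lemma Srcons_ext K (P Q : pred (seq step)) x :
  (forall t, P (rcons t x) = Q (rcons t x)) -> Srcons K P x = Srcons K Q x.
Proof.
move=> H; rewrite /Srcons; apply: eq_bigr => k _; apply: eq_bigr => t _.
by rewrite H.
Qed.

End Sums.

Section Comb.
Variable C : numClosedFieldType.
Variable alpha : nat -> C.
Variable r : nat.

Lemma LS_ext K (P Q : pred (seq step)) : (forall t, P t = Q t) ->
  LS alpha r K P = LS alpha r K Q.
Proof.
move=> H; rewrite /LS; apply: eq_bigr => k _; apply: eq_big => // t.
Qed.

Lemma Srcons0 K (P : pred (seq step)) x : (forall t, ~~ P (rcons t x)) ->
  Srcons alpha r K P x = 0.
Proof.
move=> H; rewrite /Srcons big1 // => k _; rewrite big1 // => t _.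
by rewrite (negbTE (H t)).
Qed.

Definition Apred n s (t : seq step) :=
  [&& valid_from r t s, xlen t == n & head SH t != SD].

Definition Ac n s := LS alpha r (2 * n + r).+1 (Apred n s).

Lemma schroder_LS n s :
  schroder_sum alpha n r s = LS alpha r (2 * n + r).+1 (schroder_ok n r s).
Proof. by rewrite /schroder_sum /LS; apply: eq_bigr => k _; rewrite tuple_lists. Qed.

Lemma Apred_size n s t : Apred n s t -> (size t < (2 * n + r).+1)%N.
Proof.
case/and3P=> /valid_size H /eqP Hx _; move: H; rewrite Hx; lia.
Qed.

Lemma Ac_bound n s K : (2 * n + r < K)%N -> LS alpha r K (Apred n s) = Ac n s.
Proof. by move=> HK; apply: LS_bound => // t; exact: Apred_size. Qed.

Lemma C1 s : Ac 0 s = if s == r then 1 else 0.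
Proof.
rewrite /Ac muln0 add0n LS_S.
rewrite !Srcons0; first last.
- by move=> t; apply/negP => /and3P[_ /eqP H1 H2]; by have := xlen0_head H1 H2; case: (t).
- by move=> t; apply/negP => /and3P[_ /eqP H1 H2]; by have := xlen0_head H1 H2; case: (t).
- by move=> t; apply/negP => /and3P[_ /eqP H1 H2]; by have := xlen0_head H1 H2; case: (t).
rewrite /Apred /= neqHD !addr0 eq_sym.
by case: (s == r).
Qed.

Lemma C2 n s : schroder_sum alpha n.+1 r s =
  (if (0 < s)%N then Ac n s.-1 else 0) + Ac n s * wst alpha s SH.
Proof.
rewrite schroder_LS.
have -> : (2 * n.+1 + r = (2 * n + r).+2)%N by lia.
rewrite LS_S /schroder_ok /= andbF add0r.
rewrite [Srcons _ _ _ _ SD]Srcons0; last first.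
  by move=> t; rewrite last_rcons eqxx !andbF.
rewrite addr0.
rewrite (@Srcons_eq _ _ _ _ _ (fun t => (0 < s)%N && Apred n s.-1 t) _ 1); first last.
- by move=> t /andP[_ /and3P[V _ _]]; rewrite (wtS_rcons _ _ V).
- move=> t; rewrite valid_rcons_U xlen_rcons neqUD addn1 eqSS.
  by rewrite head_rcons_nD ?neqUD // last_rcons neqUD andbT /Apred -!andbA.
rewrite (@Srcons_eq _ _ _ _ _ (Apred n s) _ (wst alpha s SH)); first last.
- by move=> t /and3P[V _ _]; rewrite (wtS_rcons _ _ V).
- move=> t; rewrite valid_rcons_H xlen_rcons neqHD addn1 eqSS.
  by rewrite head_rcons_nD ?neqHD // last_rcons neqHD andbT.
rewrite mulr1 !Ac_bound; try lia.
case: (0 < s)%N.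
  by rewrite (@LS_ext _ _ (Apred n s.-1)) // Ac_bound //; lia.
by rewrite LS_pred0.
Qed.

Lemma C3 n s : (0 < n)%N ->
  Ac n s = schroder_sum alpha n r s + Ac n s.+1 * wst alpha s.+1 SD.
Proof.
move=> n0; rewrite schroder_LS [Ac n s]/Ac.
rewrite !LS_S /schroder_ok /Apred /=.
have -> : (0 == n) = false by case: n n0.
rewrite !andbF !add0r [Srcons _ _ _ (fun p => [&& _, _, _ & _]) SD]Srcons0; last first.
  by move=> t; rewrite last_rcons eqxx !andbF.
rewrite addr0.
rewrite (@Srcons_eq _ _ _ _ _ (Apred n s.+1) SD (wst alpha s.+1 SD)); first last.
- by move=> t /and3P[V _ _]; rewrite (wtS_rcons _ _ V).
- move=> t; rewrite valid_rcons_D xlen_rcons neqDD addn0 head_rcons_D /Apred.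
  case: t => [|y t] //=.
  by have -> : (0 == n) = false by case: n n0.
congr (_ + _ + _).
- by apply: Srcons_ext => t; rewrite last_rcons neqUD andbT.
- by apply: Srcons_ext => t; rewrite last_rcons neqHD andbT.
congr (_ * _).
rewrite /Ac; symmetry; apply: LS_bound => // t /and3P[/valid_size V /eqP X _].
by move: V; rewrite X; lia.
Qed.

Lemma C4 n s : (n + r < s)%N -> Ac n s = 0 /\ schroder_sum alpha n r s = 0.
Proof.
move=> Hs; split; last rewrite schroder_LS; apply: LS_pred0 => t; apply/negP.
  by case/and3P=> /valid_le V /eqP X _; move: V; rewrite X; lia.
by case/and4P=> /valid_le V /eqP X _ _; move: V; rewrite X; lia.
Qed.

End Comb.



Section Alg.
Variable C : numClosedFieldType.
Variable alpha : nat -> C.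
Local Notation a := (am1 alpha).
Local Notation Ph := (Phi alpha).
Local Notation Ps := (Phi_star alpha).

Lemma conj_rho (x : C) : (1 - `|x| ^+ 2)^* = 1 - `|x| ^+ 2.
Proof. by rewrite rmorphB rmorph1 rmorphXn /= conj_normC. Qed.

Lemma coef_pstar d (p : {poly C}) i :
  (pstar d p)`_i = if (i <= d)%N then (p`_(d - i))^* else 0.
Proof. by rewrite /pstar coef_poly ltnS. Qed.

Lemma pstarB d (p q : {poly C}) : pstar d (p - q) = pstar d p - pstar d q.
Proof.
apply/polyP => i; rewrite coefB !coef_pstar coefB.
by case: ifP; rewrite ?subr0 // rmorphB.
Qed.

Lemma pstarZ d (c : C) (p : {poly C}) : pstar d (c *: p) = c^* *: pstar d p.
Proof.
apply/polyP => i; rewrite coefZ !coef_pstar coefZ.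
by case: ifP; rewrite ?mulr0 // rmorphM.
Qed.

Lemma Phi_coef s : (forall j, (s < j)%N -> (Ph s)`_j = 0) /\ (Ph s)`_s = 1.
Proof.
elim: s => [|s [IH1 IH2]] /=.
  by split; [move=> j; rewrite coef1; case: j | rewrite coef1].
split.
  move=> j Hj; rewrite coefB coefXM coefZ coef_pstar.
  have -> : (j == 0%N) = false by case: j Hj.
  have -> : (j <= s)%N = false by lia.
  rewrite (IH1 j.-1); last by case: j Hj => // j; rewrite ltnS.
  by rewrite mulr0 subr0.
rewrite coefB coefXM coefZ coef_pstar /= IH2.
by rewrite ltnn mulr0 subr0.
Qed.

Lemma Phi_size s : (size (Ph s) <= s.+1)%N.
Proof. by apply/leq_sizeP => j Hj; apply: (proj1 (Phi_coef s)). Qed.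

Lemma pstar_mulX d (p : {poly C}) : (size p <= d.+1)%N ->
  pstar d.+1 ('X * p) = pstar d p.
Proof.
move=> Hs; apply/polyP => i; rewrite !coef_pstar coefXM.
case: (ltngtP i d.+1) => H.
- have -> : (d.+1 - i = (d - i).+1)%N by lia.
  by have -> : (i <= d)%N by lia.
- by have -> : (i <= d)%N = false by lia.
- by rewrite H subnn ltnn rmorph0.
Qed.

Lemma pstar_pstar d (p : {poly C}) : (size p <= d.+1)%N ->
  pstar d.+1 (pstar d p) = 'X * p.
Proof.
move=> Hs; apply/polyP => i; rewrite !coef_pstar coefXM.
case: i => [|i] /=.
  by rewrite subn0 ltnn rmorph0.
rewrite ltnS; case: (leqP i d) => H.
  have -> : (d.+1 - i.+1 <= d)%N by lia.
  have -> : (d - (d.+1 - i.+1) = i)%N by lia.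
  by rewrite conjCK.
by rewrite nth_default //; apply: leq_trans Hs H.
Qed.

Lemma Phi_star_S s : Ps s.+1 = Ps s - alpha s *: ('X * Ph s).
Proof.
rewrite /Phi_star /= pstarB pstarZ pstar_mulX ?Phi_size //.
by rewrite pstar_pstar ?Phi_size // conjCK.
Qed.

Lemma Phi_star0 : Ps 0 = 1.
Proof.
apply/polyP => i; rewrite /Phi_star coef_pstar coef1.
case: i => [|i] //=; by rewrite subn0 coef1 rmorph1.
Qed.

Lemma Phi_star_rec s : Ps s = (1 - `|a s| ^+ 2) *: Ps s.-1 - a s *: Ph s.
Proof.
case: s => [|s] /=.
  by rewrite Phi_star0 normrN normr1 expr1n subrr scale0r sub0r scaleN1r opprK.
rewrite Phi_star_S /= scalerBr scalerA -normCK scalerBl scale1r.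
by rewrite opprB addrA subrK.
Qed.

Lemma Phi_eq_X s : alpha s != 0 ->
  'X * Ph s = (alpha s)^-1 *: (Ps s - Ps s.+1).
Proof.
move=> Ha; rewrite Phi_star_S opprB addrC subrK scalerA mulVf //.
by rewrite scale1r.
Qed.

Lemma Phi0 s : (Ph s)`_0 = - (a s)^*.
Proof.
case: s => [|s] /=; first by rewrite coef1 rmorphN1 opprK.
by rewrite coefB coefXM coefZ coef_pstar /= subn0 (proj2 (Phi_coef s)) rmorph1 mulr1 sub0r.
Qed.

Lemma Phi_star_top s : (Ps s)`_s = - a s.
Proof. by rewrite /Phi_star coef_pstar leqnn subnn Phi0 rmorphN /= conjCK. Qed.

Lemma Phi_star_hi s j : (s < j)%N -> (Ps s)`_j = 0.
Proof. by move=> H; rewrite /Phi_star coef_pstar leqNgt H. Qed.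

Lemma tele N (T : nat -> C) :
  \sum_(s < N) (T s - (1 - `|a s.+1| ^+ 2) * T s.+1) *: Ps s =
  \sum_(s < N) (- a s * T s) *: Ph s - ((1 - `|a N| ^+ 2) * T N) *: Ps N.-1.
Proof.
elim: N => [|N IH].
  by rewrite !big_ord0 /= normrN normr1 expr1n subrr mul0r scale0r subrr.
rewrite !big_ord_recr /= IH (Phi_star_rec N).
apply/polyP => i; rewrite !(coefD, coefB, coefZ, coefN).
ring.
Qed.

Lemma zcoef N (b : nat -> C) : (forall s, (s < N)%N -> alpha s != 0) ->
  'X * \sum_(s < N) b s *: Ph s = \sum_(s < N.+1)
     ((if (s < N)%N then b s / alpha s else 0)
      - (if (0 < s)%N then b s.-1 / alpha s.-1 else 0)) *: Ps s.
Proof.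
move=> Ha; rewrite mulr_sumr.
under eq_bigr => i _ do rewrite -scalerAr (Phi_eq_X (Ha _ (ltn_ord i))) scalerA scalerBr.
rewrite sumrB.
under [RHS]eq_bigr => i _ do rewrite scalerBl.
rewrite sumrB big_ord_recr /= ltnn scale0r addr0 big_ord_recl /= scale0r add0r.
congr (_ - _); apply: eq_bigr => i _ /=; rewrite ?ltn_ord mulrC //.
Qed.

Lemma uniq_coef K (u : nat -> C) : (forall j, (j < K)%N -> a j != 0) ->
  \sum_(s < K) u s *: Ps s = 0 -> forall s, (s < K)%N -> u s = 0.
Proof.
elim: K => [|K IH] Ha H s Hs //.
have HK : u K = 0.
  have := congr1 (fun p : {poly C} => p`_K) H.
  rewrite /= coef0 coef_sum big_ord_recr /= coefZ Phi_star_top big1 ?add0r.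
    move/eqP; rewrite mulf_eq0 oppr_eq0 (negbTE (Ha K (ltnSn K))) orbF.
    by move/eqP.
  by move=> i _; rewrite coefZ Phi_star_hi ?mulr0.
move: H; rewrite big_ord_recr /= HK scale0r addr0 => H.
case: (ltngtP s K) => Hs'.
- by apply: IH => // j Hj; apply: Ha; lia.
- lia.
- by rewrite Hs'.
Qed.

Definition eta0 r s : C :=
  if s == r then - ((a r)^*)^-1
  else if s.+1 == r then (1 - `|a r| ^+ 2) / (a r)^* else 0.

Lemma P0 r : a r != 0 -> Ph r = \sum_(s < r.+1) (eta0 r s)^* *: Ps s.
Proof.
move=> Ha; rewrite big_ord_recr /= /eta0 eqxx.
case: r Ha => [|r] Ha.
  by rewrite big_ord0 add0r /= Phi_star0 rmorphN1 invrN1 opprK rmorph1 scale1r.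
rewrite big_ord_recr /= big1 ?add0r; last first.
  move=> i _.
  have -> : (i == r.+1 :> nat) = false by apply/negbTE; rewrite neq_ltn ltnS ltnW.
  have -> : (i.+1 == r.+1 :> nat) = false by apply/negbTE; rewrite neq_ltn ltnS ltn_ord.
  by rewrite rmorph0 scale0r.
have -> : (r == r.+1) = false by elim: r {Ha}.
rewrite eqxx (Phi_star_rec r.+1) /=.
rewrite rmorphM fmorphV /= conjCK conj_rho rmorphN fmorphV /= conjCK.
apply/polyP => i; rewrite !(coefD, coefB, coefZ, coefN).
by field.
Qed.

End Alg.

Unset Implicit Arguments. Set Strict Implicit. Set Printing Implicit Defensive.

Theorem proposition5p3 (C : numClosedFieldType) (alpha : nat -> C)
  (n r : nat) (c : nat -> C)
  (Hlt : forall k, `|alpha k| < 1)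
  (Hnz : forall i, (i <= n + r)%N -> alpha i != 0)
  (Hc : 'X^n * Phi alpha r = \sum_(s < (n + r).+1) c s *: Phi_star alpha s)
  (Hc0 : forall s, (n + r < s)%N -> c s = 0)
  (s : nat) :
  ((0 < n)%N -> (c s)^* = - ((am1 alpha s)^*)^-1 * schroder_sum alpha n r s)
  /\
  (n = 0%N -> (c s)^* =
     if s == r then - ((am1 alpha r)^*)^-1
     else if s.+1 == r then (1 - `|am1 alpha r| ^+ 2) / (am1 alpha r)^*
     else 0).
Proof.
have Ha : forall j, (j <= n + r)%N -> am1 alpha j != 0.
  case=> [|j] Hj /=; first by rewrite oppr_eq0 oner_eq0.
  by apply: Hnz; lia.
pose eta m s := if m is 0 then eta0 alpha r s
                else - ((am1 alpha s)^*)^-1 * schroder_sum alpha m r s.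
have claim : forall m, (m <= n)%N ->
    'X^m * Phi alpha r = \sum_(s < (m + r).+1) (eta m s)^* *: Phi_star alpha s.
  elim => [|m IH] Hm.
    by rewrite expr0 mul1r add0n; apply: P0; apply: Ha; lia.
  rewrite exprS -mulrA IH; last by lia.
  pose T s := (- Ac alpha r m s / (am1 alpha s)^*)^*.
  have Hrec : forall s, (s < (m + r).+1)%N ->
      (eta m s)^* = T s - (1 - `|am1 alpha s.+1| ^+ 2) * T s.+1.
    move=> s0 Hs0.
    suff key : eta m s0 = - Ac alpha r m s0 / (am1 alpha s0)^*
        - (1 - `|am1 alpha s0.+1| ^+ 2) * (- Ac alpha r m s0.+1 / (am1 alpha s0.+1)^*).
      by rewrite key rmorphB; congr (_ - _); rewrite rmorphM /= conj_rho.
    have a0 : (am1 alpha s0)^* != 0 by rewrite conjC_eq0; apply: Ha; lia.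
    case: m IH Hm {T} Hs0 => [|m] IH Hm Hs0.
      rewrite /eta /eta0 !C1.
      case: (eqVneq s0 r) => [->|nsr].
        have -> : (r.+1 == r) = false by apply/negbTE; rewrite neq_ltn ltnSn orbT.
        ring.
      case: (eqVneq s0.+1 r) => [<-|nsr1].
        ring.
      ring.
    rewrite /eta (C3 _ _ _ (ltn0Sn m)) /wst /=.
    have a1 : (alpha s0)^* != 0 by rewrite conjC_eq0; apply: Hnz; lia.
    by field; apply/andP; split.
  have HT : T (m + r).+1 = 0.
    by rewrite /T (proj1 (@C4 _ alpha r m (m + r).+1 (ltnSn _))) oppr0 mul0r rmorph0.
  rewrite (eq_bigr (fun i : 'I_(m + r).+1 =>
     (T i - (1 - `|am1 alpha (i : nat).+1| ^+ 2) * T (i : nat).+1) *: Phi_star alpha i));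
    last by move=> i _; rewrite Hrec.
  rewrite tele HT mulr0 scale0r subr0 (@zcoef _ alpha _ (fun s => - am1 alpha s * T s)); last by move=> i Hi; apply: Hnz; lia.
  rewrite addSn; apply: eq_bigr => i _; congr (_ *: _).
  have Hb : forall j, (j <= (m + r).+1)%N -> - am1 alpha j * T j = (Ac alpha r m j)^*.
    move=> j Hj; rewrite /T.
    have aj : am1 alpha j != 0 by apply: Ha; lia.
    rewrite rmorphM rmorphN fmorphV /= conjCK.
    by field.
  have Hi : (i <= (m + r).+1)%N by have := ltn_ord i.
  have -> : (if (i < (m + r).+1)%N then - am1 alpha i * T i / alpha i else 0)
            = (Ac alpha r m i)^* / alpha i.
    case: ifP => H; first by rewrite Hb.
    have -> : (i : nat) = (m + r).+1 by lia.
    by rewrite (proj1 (@C4 _ alpha r m (m + r).+1 (ltnSn _))) rmorph0 mul0r.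
  move: Hi; move: (nat_of_ord i) => j Hj.
  rewrite /eta (C2 alpha) /wst.
  case: j Hj => [|j] Hj /=.
    have a0 : alpha 0 != 0 by apply: Hnz; lia.
    rewrite !(rmorphM, rmorphN, rmorphD, rmorphB, fmorphV, rmorphN1, rmorph1) /= ?conjCK.
    rewrite rmorph0 subr0.
    by field.
  have a0 : alpha j != 0 by apply: Hnz; lia.
  have a1 : alpha j.+1 != 0 by apply: Hnz; lia.
  rewrite Hb; last by lia.
  rewrite !(rmorphM, rmorphN, rmorphD, rmorphB, fmorphV, rmorphN1, rmorph1) /= ?conjCK.
  by field; apply/andP; split.
have Hsum : \sum_(s < (n + r).+1) (c s - (eta n s)^*) *: Phi_star alpha s = 0.
  under eq_bigr do rewrite scalerBl.
  by rewrite sumrB -Hc -claim // subrr.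
have Hcs : c s = (eta n s)^*.
  case: (ltnP s (n + r).+1) => Hs.
    apply/eqP; rewrite -subr_eq0; apply/eqP.
    apply: (@uniq_coef _ alpha _ (fun s => c s - (eta n s)^*) _ Hsum) => // j Hj; apply: Ha; lia.
  rewrite Hc0 //; rewrite /eta.
  case: n {Hnz Hc Hc0 Ha claim Hsum eta} Hs => [|n] Hs.
    rewrite /eta0.
    have -> : (s == r) = false by apply/negbTE; rewrite neq_ltn; apply/orP; right; lia.
    have -> : (s.+1 == r) = false by apply/negbTE; rewrite neq_ltn; apply/orP; right; lia.
    by rewrite rmorph0.
  by rewrite (proj2 (@C4 _ alpha r n.+1 s _)) ?mulr0 ?rmorph0 //; lia.
rewrite Hcs conjCK /eta; split.
  by case: n {Hnz Hc Hc0 Ha claim Hsum Hcs eta}.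
by move=> n0; move: Hcs; rewrite n0.
Qed.
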